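(* Let $G$ be a strongly connected directed multigraph with a designated set of ordinary vertices such that every two distinct ordinary vertices are $(k+1)$-edge-connected, and let $s$ be a fixed ordinary vertex. Let $u$ and $w$ be two ordinary vertices such that $M(u)\neq M(w)$. Then either $M(u)\neq\bot$ and $w\notin M(u)$, or $M(w)\neq\bot$ and $u\notin M(w)$.
   Context: For a vertex set $S$, $\mathit{out}(S)$ is the number of edges leaving $S$; $S$ is a $j$-out set if $\mathit{out}(S)=j$. For vertices $x,y$, $\lambda(x,y)$ is the minimum of $\mathit{out}(S)$ over vertex sets $S$ with $x\in S$, $y\notin S$. Two vertices $x,y$ are $j$-edge-connected if $\lambda(x,y)\ge j$ and $\lambda(y,x)\ge j$. For a vertex $v$ with $\lambda(v,s)\ge k+1$: if there is a $(k+1)$-out set $S$ with $v\in S$, $s\notin S$, then $M(v)$ denotes the inclusion-wise minimum such $(k+1)$-out set; otherwise $M(v)=\bot$. *)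

(* Defs.v *)
From mathcomp Require Import all_boot.
Set Implicit Arguments. Unset Strict Implicit. Unset Printing Implicit Defensive.

(* A directed multigraph on a finite vertex type V is given by its edge
   multiplicity function m : m x y = number of edges from x to y. *)
Section Graph.
Variables (V : finType) (m : V -> V -> nat).

Definition out (S : {set V}) : nat :=
  \sum_(x in S) \sum_(y in ~: S) m x y.

Definition adj : rel V := fun x y => 0 < m x y.

Definition strongly_connected : Prop := forall x y : V, connect adj x y.

(* lambda(x,y) >= j, i.e. min { out S | x in S, y notin S } >= j *)
Definition lambda_ge (x y : V) (j : nat) : Prop :=
  forall S : {set V}, x \in S -> y \notin S -> j <= out S.

Definition edge_conn (x y : V) (j : nat) : Prop :=
  lambda_ge x y j /\ lambda_ge y x j.

Definition Mcands (k : nat) (s v : V) : {set {set V}} :=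
  [set S : {set V} | (v \in S) && (s \notin S) && (out S == k.+1)].

(* M(v): the inclusion-wise minimum such set, or None (= bot) *)
Definition M (k : nat) (s v : V) : option {set V} :=
  [pick S in Mcands k s v | [forall T in Mcands k s v, S \subset T]].

End Graph.

(* Main.v *)
Require Import Defs.
From mathcomp Require Import all_boot.
From mathcomp Require Import zify.

Section Aux.
Variables (V : finType) (m : V -> V -> nat).

Lemma outE (S : {set V}) :
  out m S = \sum_x \sum_y ((x \in S) && (y \notin S)) * m x y.
Proof.
rewrite /out big_mkcond; apply: eq_bigr => x _.
case: (boolP (x \in S)) => xS /=.
  rewrite big_mkcond; apply: eq_bigr => y _; rewrite in_setC.
  by case: (y \in S) => /=; rewrite ?mul1n ?mul0n.
by rewrite big1 // => y _; rewrite mul0n.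
Qed.

Lemma out_submod (A B : {set V}) :
  out m (A :&: B) + out m (A :|: B) <= out m A + out m B.
Proof.
rewrite !outE -!big_split /=; apply: leq_sum => x _.
rewrite -!big_split /=; apply: leq_sum => y _.
rewrite !inE.
case: (x \in A); case: (x \in B); case: (y \in A); case: (y \in B) => /=; lia.
Qed.

Variables (O : {set V}) (k : nat) (s : V).
Hypothesis conn : forall x y, x \in O -> y \in O -> x != y -> edge_conn m x y k.+1.
Hypothesis sO : s \in O.

Lemma Mcands_inter v A B : v \in O ->
  A \in Mcands m k s v -> B \in Mcands m k s v -> A :&: B \in Mcands m k s v.
Proof.
move=> vO; rewrite !inE => /andP[/andP[vA sA] /eqP oA] /andP[/andP[vB sB] /eqP oB].
have vs : v != s by apply/eqP => E; rewrite -E vA in sA.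
have [H _] := conn _ _ vO sO vs.
have h1 := H (A :&: B); have h2 := H (A :|: B).
have h1' : k.+1 <= out m (A :&: B).
  by apply: h1; rewrite !inE ?vA ?vB ?(negbTE sA) ?(negbTE sB).
have h2' : k.+1 <= out m (A :|: B).
  by apply: h2; rewrite !inE ?vA ?vB ?(negbTE sA) ?(negbTE sB).
have := out_submod A B; rewrite oA oB => hs.
apply/eqP; lia.
Qed.

Lemma M_exists v T : v \in O -> T \in Mcands m k s v ->
  exists S, M m k s v = Some S.
Proof.
move=> vO TC.
case: (arg_minnP (fun X : {set V} => #|X|) TC) => T0 T0C T0min.
rewrite /M; case: pickP => [S _|]; first by exists S.
have {}T0C : T0 \in Mcands m k s v := T0C.
move=> /(_ T0) /negbT; rewrite T0C /= => /negP H; exfalso; apply: H.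
apply/forall_inP => T1 T1C.
have IC := @Mcands_inter v T0 T1 vO T0C T1C.
have hc : #|T0| <= #|T0 :&: T1| := T0min _ IC.
have E : T0 :&: T1 = T0.
  apply/eqP; rewrite eqEcard subsetIl hc andbT //.
by rewrite -E subsetIr.
Qed.

End Aux.

Lemma M_spec (V : finType) (m : V -> V -> nat) k s v S :
  M m k s v = Some S ->
  S \in Mcands m k s v /\ forall T, T \in Mcands m k s v -> S \subset T.
Proof.
rewrite /M; case: pickP => // S' /andP[H1 /forall_inP H2] [<-]; split => //.
Qed.

Theorem mainTheorem4 (V : finType) (m : V -> V -> nat) (O : {set V}) (k : nat)
  (s u w : V) :
  strongly_connected m ->
  (forall x y, x \in O -> y \in O -> x != y -> edge_conn m x y k.+1) ->
  s \in O -> u \in O -> w \in O ->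
  M m k s u <> M m k s w ->
  (exists S, M m k s u = Some S /\ w \notin S) \/
  (exists S, M m k s w = Some S /\ u \notin S).
Proof.
move=> _ conn sO uO wO neq.
case Eu: (M m k s u) => [S|].
  case: (boolP (w \in S)) => wS; last by left; exists S.
  have [SC Smin] := @M_spec V m _ _ _ _ Eu.
  have SCw : S \in Mcands m k s w.
    by move: SC; rewrite !inE wS => /andP[/andP[_ ->] ->].
  have [S' Ew] := @M_exists V m O k s conn sO _ _ wO SCw.
  have [S'C S'min] := @M_spec V m _ _ _ _ Ew.
  case: (boolP (u \in S')) => uS'; last by right; exists S'.
  have S'Cu : S' \in Mcands m k s u.
    by move: S'C; rewrite !inE uS' => /andP[/andP[_ ->] ->].
  exfalso; apply: neq; rewrite Eu Ew; congr Some.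
  by apply/eqP; rewrite eqEsubset Smin // S'min.
case Ew: (M m k s w) => [S'|]; last by rewrite Eu Ew in neq.
have [S'C S'min] := @M_spec V m _ _ _ _ Ew.
case: (boolP (u \in S')) => uS'; last by right; exists S'.
have S'Cu : S' \in Mcands m k s u.
  by move: S'C; rewrite !inE uS' => /andP[/andP[_ ->] ->].
have [S Eu'] := @M_exists V m O k s conn sO _ _ uO S'Cu.
by rewrite Eu in Eu'.
Qed.
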